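(* Let $\mathcal{M}=(E,\rho)$ be a $q$-matroid. (a) If $F$ is a flat, then $\mathrm{cyc}(F)$ is a flat. (b) If $F$ is open (cyclic), then $\mathrm{cl}(F)$ is open. As a consequence, every subspace $V\le E$ satisfies $\mathrm{cl}(\mathrm{cyc}(V))\le\mathrm{cyc}(\mathrm{cl}(V))$, and both of these spaces are cyclic flats.
   Context: Let $\mathbb{F}=\mathbb{F}_q$. A $q$-matroid is $\mathcal{M}=(E,\rho)$, $E$ a finite-dimensional $\mathbb{F}$-vector space, $\rho$ from subspaces to $\mathbb{Z}_{\ge0}$ with $0\le\rho(V)\le\dim V$, monotone and submodular. Flat: $\rho(F+\langle x\rangle)>\rho(F)$ for all $x\notin F$. Closure: $\mathrm{cl}(V)=\sum\{\langle x\rangle:\rho(V+\langle x\rangle)=\rho(V)\}$. Independent: $\rho(V)=\dim V$; circuit: dependent subspace with all proper subspaces independent; open: sum of circuits (empty sum $=0$). Cyclic core: $\mathrm{cyc}(V)=\{x\in V\mid\rho(W)=\rho(V)\text{ for all }W\le V\text{ with }W+\langle x\rangle=V\}$; $V$ is cyclic if $\mathrm{cyc}(V)=V$, which is equivalent to $V$ being open. A cyclic flat is a subspace that is both a flat and cyclic. *)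

(* Defs.v *)
From HB Require Import structures.
From mathcomp Require Import all_boot all_order all_algebra all_fingroup all_field.
From Stdlib Require Import ClassicalEpsilon.

Set Implicit Arguments.
Unset Strict Implicit.
Unset Printing Implicit Defensive.

Import GRing.Theory.
Local Open Scope ring_scope.
Local Open Scope vspace_scope.

Section QMatroid.
Variables (F : finFieldType) (E : vectType F).

Definition qmatroid (rho : {vspace E} -> nat) : Prop :=
  [/\ (forall V, (rho V <= \dim V)%N),
      (forall U V : {vspace E}, (U <= V)%VS -> (rho U <= rho V)%N)
    & (forall U V : {vspace E},
         (rho (U + V)%VS + rho (U :&: V)%VS <= rho U + rho V)%N)].

Variable rho : {vspace E} -> nat.

Definition flat (X : {vspace E}) : Prop :=
  forall x : E, x \notin X -> (rho X < rho (X + <[x]>)%VS)%N.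

(* cl(V) = sum of <x> over all x with rho(V + <x>) = rho(V);
   E is finite, enumerated through finvect_type E. *)
Definition cl (V : {vspace E}) : {vspace E} :=
  (\sum_(x : finvect_type E | rho (V + <[x : E]>)%VS == rho V) <[x : E]>)%VS.

Definition in_cyc (V : {vspace E}) (x : E) : Prop :=
  x \in V /\
  forall W : {vspace E}, (W <= V)%VS -> (W + <[x]>)%VS = V -> rho W = rho V.

Definition in_cycb (V : {vspace E}) (x : E) : bool :=
  if excluded_middle_informative (in_cyc V x) then true else false.

(* cyc(V) as a subspace: the span of the set {x in V | ...}, i.e. the sum of
   the lines <x> for x in that set (the set is itself a subspace). *)
Definition cyc (V : {vspace E}) : {vspace E} :=
  (\sum_(x : finvect_type E | in_cycb V (x : E)) <[x : E]>)%VS.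

Definition cyclic (V : {vspace E}) : Prop := cyc V = V.

Definition cyclic_flat (V : {vspace E}) : Prop := flat V /\ cyclic V.

(* Independent / circuit / open, for reference (open <-> cyclic, as stated in
   the paper's context). *)
Definition indep (V : {vspace E}) : Prop := rho V = \dim V.
Definition circuit (C : {vspace E}) : Prop :=
  ~ indep C /\ forall D : {vspace E}, (D <= C)%VS -> D != C -> indep D.

Definition open_space (V : {vspace E}) : Prop :=
  exists Cs : seq {vspace E},
    (forall C, C \in Cs -> circuit C) /\ V = (\sum_(C <- Cs) C)%VS.

End QMatroid.

(* Main.v *)
Require Import Defs.
From HB Require Import structures.
From mathcomp Require Import all_boot all_order all_algebra all_fingroup all_field.
From mathcomp Require Import zify.
From Stdlib Require Import Classical ClassicalEpsilon.

Set Implicit Arguments.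
Unset Strict Implicit.
Unset Printing Implicit Defensive.

Local Open Scope ring_scope.
Local Open Scope vspace_scope.

Section Helpers.
Variables (F : finFieldType) (E : vectType F) (rho : {vspace E} -> nat).
Hypothesis Hq : qmatroid rho.
Implicit Types U V W X A B C D : {vspace E}.

Lemma rle V : (rho V <= \dim V)%N.
Proof. by case: Hq. Qed.

Lemma rmono U V : (U <= V)%VS -> (rho U <= rho V)%N.
Proof. by case: Hq => _ H _; apply: H. Qed.

Lemma rsub U V : (rho (U + V) + rho (U :&: V) <= rho U + rho V)%N.
Proof. by case: Hq. Qed.

Lemma r_add_dim U V : (rho (U + V) <= rho U + \dim V)%N.
Proof. have := rsub U V; have := rle V; lia. Qed.

Lemma S_lem C A (x : E) : (C <= A)%VS ->
  (rho (A + <[x]>) + rho C <= rho A + rho (C + <[x]>))%N.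
Proof.
move=> CA; have := rsub A (C + <[x]>).
rewrite addvA (addv_idPl CA).
have : (rho C <= rho (A :&: (C + <[x]>)))%N.
  by apply: rmono; rewrite subv_cap CA addvSl.
lia.
Qed.

Lemma dim_line_add A (x : E) : (\dim (A + <[x]>) <= (\dim A).+1)%N.
Proof.
have [le _] := dimv_add_leqif A <[x]>.
rewrite dim_vline in le; have := leq_b1 (x != 0%R); lia.
Qed.

Lemma Dlem A B (y : E) : (A <= B)%VS -> (\dim B <= (\dim A).+1)%N ->
  y \in B -> y \notin A -> (A + <[y]>)%VS = B.
Proof.
move=> AB dB yB yA; apply/eqP; rewrite eqEdim subv_add AB -memvE yB /=.
have sub : (A <= A + <[y]>)%VS := addvSl _ _.
have [le eqi] := dimv_leqif_eq sub.
have ne : A != (A + <[y]>)%VS.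
  apply: contra yA => /eqP ->; by rewrite memvE addvSr.
rewrite -eqi in ne.
have : (\dim A < \dim (A + <[y]>))%N by rewrite ltn_neqAle ne le.
lia.
Qed.

Lemma cl_gen V (x : E) : rho (V + <[x]>) = rho V -> (<[x]> <= cl rho V)%VS.
Proof.
move=> H; apply: (sumv_sup (x : finvect_type E)) => //=; by apply/eqP.
Qed.

Lemma cl_ext V : (V <= cl rho V)%VS.
Proof.
apply/subvP => x xV; rewrite memvE; apply: cl_gen.
by rewrite (addv_idPl _) // -memvE.
Qed.

Lemma cl_rank V : rho (cl rho V) = rho V.
Proof.
have H : rho (V + cl rho V) = rho V.
  rewrite /cl; apply: (big_ind (fun S => rho (V + S) = rho V)).
  - by rewrite addv0.
  - move=> S1 S2 H1 H2.
    have h1 : (rho (V + (S1 + S2)) <= rho ((V + S1) + (V + S2)))%N.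
      apply: rmono; rewrite subv_add; apply/andP; split.
        exact: subv_trans (addvSl V S1) (addvSl _ _).
      exact: addvS (addvSr V S1) (addvSr V S2).
    have h2 : (rho V <= rho ((V + S1) :&: (V + S2)))%N.
      by apply: rmono; rewrite subv_cap !addvSl.
    have h3 : (rho V <= rho (V + (S1 + S2)))%N by apply: rmono; apply: addvSl.
    have := rsub (V + S1) (V + S2); lia.
  - by move=> i /eqP.
by rewrite (addv_idPr (cl_ext V)) in H.
Qed.

Lemma cl_flat V : flat rho (cl rho V).
Proof.
move=> x xn; rewrite ltnNge; apply/negP => le; apply: (negP xn).
rewrite memvE; apply: cl_gen; apply/eqP; rewrite eqn_leq; apply/andP; split; last first.
  by apply: rmono; apply: addvSl.
have : (rho (V + <[x]>) <= rho (cl rho V + <[x]>))%N.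
  by apply: rmono; apply: addvS (cl_ext V) (subvv _).
by rewrite cl_rank in le; lia.
Qed.

Lemma cl_min X D : (X <= D)%VS -> flat rho D -> (cl rho X <= D)%VS.
Proof.
move=> XD fD; apply/subv_sumP => x /eqP Hx; rewrite -memvE.
apply: contraT => xD; have := fD x xD; have := S_lem x XD; lia.
Qed.

Lemma in_cycbP V (x : E) : in_cycb rho V x = true <-> in_cyc rho V x.
Proof. by rewrite /in_cycb; case: excluded_middle_informative. Qed.

Lemma mem_cyc V (y : E) : in_cyc rho V y -> y \in cyc rho V.
Proof.
move=> Hy; rewrite memvE; apply: (sumv_sup (y : finvect_type E)) => //.
exact/in_cycbP.
Qed.

Lemma cyc_leP V B : (forall y, in_cyc rho V y -> y \in B) -> (cyc rho V <= B)%VS.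
Proof. by move=> H; apply/subv_sumP => y /in_cycbP Hy; rewrite -memvE; auto. Qed.

Lemma cyc_sub V : (cyc rho V <= V)%VS.
Proof. by apply: cyc_leP => y []. Qed.

Lemma L1 W V (x : E) : (W <= V)%VS -> (W + <[x]>)%VS = V -> (rho W < rho V)%N ->
  forall y, in_cyc rho V y -> y \in W.
Proof.
move=> WV WxV lt y [yV Hy]; apply: contraT => yW.
have dimV : (\dim V <= (\dim W).+1)%N by rewrite -WxV dim_line_add.
have := Hy W WV (Dlem WV dimV yV yW); lia.
Qed.

Lemma not_in_cyc V (x : E) : x \in V -> ~ in_cyc rho V x ->
  exists W, [/\ (W <= V)%VS, (W + <[x]>)%VS = V & (rho W < rho V)%N].
Proof.
move=> xV nc.
case: (classic (exists W, [/\ (W <= V)%VS, (W + <[x]>)%VS = V & rho W <> rho V])).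
  move=> [W [WV WxV ne]]; exists W; split => //.
  by rewrite ltn_neqAle rmono // andbT; apply/eqP.
move=> nex; exfalso; apply: nc; split => // W WV WxV.
by apply: NNPP => ne; apply: nex; exists W.
Qed.

Lemma cyc_flat X : flat rho X -> flat rho (cyc rho X).
Proof.
move=> fF x xC.
case: (boolP (x \in X)) => xF.
  have nc : ~ in_cyc rho X x by move=> /mem_cyc; apply/negP.
  have [W [WV WxV lt]] := not_in_cyc xF nc.
  have CW : (cyc rho X <= W)%VS by apply: cyc_leP; apply: L1 WV WxV lt.
  have := S_lem x CW; rewrite WxV; lia.
have := S_lem x (cyc_sub X); have := fF x xF; lia.
Qed.

Lemma Tlem X K (y : E) : (X <= K)%VS -> rho X = rho K ->
  in_cyc rho X y -> in_cyc rho K y.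
Proof.
move=> XK rXK [yX Hy]; split; first exact: (subvP XK).
move=> W WK WyK.
case: (boolP (y \in W)) => yW.
  have e : W = K by rewrite -WyK (addv_idPl _) // -memvE.
  by rewrite e.
have dimK : (\dim K <= (\dim W).+1)%N by rewrite -WyK dim_line_add.
have hs := dimv_sum_cap W X.
have : (\dim (W + X) <= \dim K)%N by apply: dimvS; rewrite subv_add WK XK.
move=> dWX.
have dX : (\dim X <= (\dim (W :&: X)).+1)%N by lia.
have yM : y \notin (W :&: X)%VS by rewrite memv_cap (negbTE yW).
have := Hy _ (capvSr W X) (Dlem (capvSr W X) dX yX yM).
have := rmono (capvSl W X); have := rmono WK; lia.
Qed.

Lemma Elem W V (x : E) : (W <= V)%VS -> (W + <[x]>)%VS = V -> (rho W < rho V)%N ->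
  forall y, in_cyc rho V y <-> in_cyc rho W y.
Proof.
move=> WV WxV lt y; split.
  move=> Hc; have yW := L1 WV WxV lt Hc; case: Hc => yV Hy.
  split => // U UW UyW; apply/eqP; rewrite eqn_leq rmono //=.
  apply: contraT; rewrite -ltnNge => lt2.
  have sub : (U + <[x]> <= V)%VS.
    by rewrite subv_add (subv_trans UW WV) -WxV addvSr.
  have e : (U + <[x]> + <[y]>)%VS = V.
    by rewrite -addvA [(<[x]> + _)%VS]addvC addvA UyW.
  have := Hy _ sub e; have := r_add_dim U <[x]>; rewrite dim_vline.
  have := leq_b1 (x != 0%R); lia.
case=> yW Hy; split; first exact: (subvP WV).
move=> U UV UyV; apply/eqP; rewrite eqn_leq rmono //=.
apply: contraT; rewrite -ltnNge => lt2.
case: (boolP (y \in U)) => yU.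
  by rewrite (addv_idPl _) -?memvE // in UyV; rewrite UyV ltnn in lt2.
have dimV : (\dim V <= (\dim U).+1)%N by rewrite -UyV dim_line_add.
have UW : (U + W)%VS = V.
  apply/eqP; rewrite eqEsubv subv_add UV WV /= -[X in (X <= _)%VS]UyV.
  by apply: addvS (subvv U) _; rewrite -memvE.
have hs := dimv_sum_cap U W; rewrite UW in hs.
have hr := rsub U W; rewrite UW in hr.
have dW : (\dim W <= (\dim (U :&: W)).+1)%N by lia.
have yM : y \notin (U :&: W)%VS by rewrite memv_cap (negbTE yU).
have := Hy _ (capvSr U W) (Dlem (capvSr U W) dW yW yM); lia.
Qed.

Lemma rank_formula n V : (\dim V < n)%N ->
  (rho (cyc rho V) + \dim V <= rho V + \dim (cyc rho V))%N.
Proof.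
elim: n V => [//|n IH] V dV.
case: (classic (forall x, x \in V -> in_cyc rho V x)) => [all|nall].
  have -> : cyc rho V = V.
    apply/eqP; rewrite eqEsubv cyc_sub /=; apply/subvP => x xV.
    by apply: mem_cyc; apply: all.
  by [].
have [x [xV nc]] : exists x, x \in V /\ ~ in_cyc rho V x.
  apply: NNPP => H; apply: nall => x xV; apply: NNPP => nc; apply: H; by exists x.
have [W [WV WxV lt]] := not_in_cyc xV nc.
have cWV : cyc rho W = cyc rho V.
  apply/eqP; rewrite eqEsubv; apply/andP; split; apply: cyc_leP => y Hy;
  apply: mem_cyc; by apply/(Elem WV WxV lt).
have dimV : (\dim V <= (\dim W).+1)%N by rewrite -WxV dim_line_add.
have ne : W != V by apply/eqP => e; rewrite e ltnn in lt.
have [le eqi] := dimv_leqif_eq WV.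
rewrite -eqi in ne.
have dW : (\dim W < n)%N.
  have : (\dim W < \dim V)%N by rewrite ltn_neqAle ne le.
  lia.
have := IH W dW; rewrite cWV; lia.
Qed.

Lemma cyc_idem V : cyc rho (cyc rho V) = cyc rho V.
Proof.
apply/eqP; rewrite eqEsubv cyc_sub /=.
apply: cyc_leP => y yc; apply: mem_cyc; split; first exact: mem_cyc.
move=> W WC WyC; apply/eqP; rewrite eqn_leq rmono //=.
apply: contraT; rewrite -ltnNge => lt.
case: yc => yV Hy.
set C := cyc rho V in WC WyC lt *.
have CV : (C <= V)%VS := cyc_sub V.
have DC : (V :\: C + C)%VS = V.
  by rewrite -{2}(capv_idPr CV) addv_diff_cap.
have sub : (W + (V :\: C) <= V)%VS.
  by rewrite subv_add (subv_trans WC CV) diffvSl.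
have e : (W + (V :\: C) + <[y]>)%VS = V.
  by rewrite -addvA [((V :\: C) + _)%VS]addvC addvA WyC addvC DC.
have := Hy _ sub e.
have := r_add_dim W (V :\: C).
have := dimv_cap_compl V C; rewrite (capv_idPr CV).
have := rank_formula (ltnSn (\dim V)); rewrite -/C.
lia.
Qed.

Lemma cl_cyclic X : cyclic rho X -> cyclic rho (cl rho X).
Proof.
rewrite /cyclic => HX.
apply/eqP; rewrite eqEsubv cyc_sub /=.
apply: (cl_min _ (cyc_flat (cl_flat (V:=X)))).

rewrite -{1}HX; apply: cyc_leP => y Hy; apply: mem_cyc.
exact: Tlem (cl_ext X) (esym (cl_rank X)) Hy.
Qed.

End Helpers.

Theorem lemma4p1 (F : finFieldType) (E : vectType F)
    (rho : {vspace E} -> nat) :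
  qmatroid rho ->
  (forall X : {vspace E}, flat rho X -> flat rho (cyc rho X)) /\
  (forall X : {vspace E}, cyclic rho X -> cyclic rho (cl rho X)) /\
  (forall V : {vspace E},
     (cl rho (cyc rho V) <= cyc rho (cl rho V))%VS /\
     cyclic_flat rho (cl rho (cyc rho V)) /\
     cyclic_flat rho (cyc rho (cl rho V))).
Proof.
move=> Hq; split; first exact: cyc_flat.
split; first exact: cl_cyclic.
move=> V; split.
  apply: (cl_min Hq _ (cyc_flat Hq (cl_flat Hq (V:=V)))).
  apply: cyc_leP => y Hy; apply: mem_cyc.
  have T1 := Tlem Hq (cl_ext rho V) (esym (cl_rank Hq V)) Hy. exact: T1.
split; split.
- exact: cl_flat.
- apply: cl_cyclic => //; exact: cyc_idem.
- exact: cyc_flat (cl_flat Hq (V:=V)).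
- exact: cyc_idem.
Qed.
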